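(* Let $\tilde\partial$ be a quasi-elementary $M_{A,B}$-differential with associated sets $P,Q,R\subset B$ and $X,Y,Z\subset A\setminus B$. (a) If $q\in Q$, $r\in R$, $y\in Y$, $z\in Z$ satisfy $\tilde\partial(q)=r$ and $\tilde\partial_{A\setminus B}(y)=z$, then $\langle\tilde\partial(y),q\rangle=-\langle\tilde\partial(z),r\rangle$. (b) If $y\in Y$, $z\in Z$ satisfy $\tilde\partial_{A\setminus B}(y)=z$ and $b\in B$ appears in $\tilde\partial(z)$, then $b\in R$ and there exists $q\in Q$ with $\tilde\partial(q)=b$ such that $q$ appears in $\tilde\partial(y)$.
   Context: $\mathbb E$ a field; $A=\{a_1\prec\dots\prec a_N\}$ a finite linearly ordered graded set; $\mathbb E(A)$ the graded vector space with basis $A$; $\langle\cdot,\cdot\rangle$ the scalar product with $\langle a_i,a_j\rangle=\delta_{ij}$. An $M$-differential is a degree $-1$ map $\partial$ with $\partial^2=0$, $\partial(a_i)\in\mathrm{span}\{a_1,\dots,a_{i-1}\}$. For $B\subset A$ with $\partial\mathbb E(B)\subset\mathbb E(B)$ it is an $M_{A,B}$-differential; $\partial_B$ denotes its restriction to $\mathbb E(B)$ and $\partial_{A\setminus B}$ the induced differential on $\mathbb E(A)/\mathbb E(B)$, identified with $\mathbb E(A\setminus B)$. An $M$-differential is elementary if every basis element maps to $0$ or to a single basis element and no two basis elements map to the same basis element. For $\partial$ with $\partial_B$, $\partial_{A\setminus B}$ elementary: $Q=\{b\in B:\partial_Bb\ne0\}$, $R=\partial_B(Q)$, $P=B\setminus(Q\cup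 R)$, $Y=\{a\in A\setminus B:\partial_{A\setminus B}a\ne0\}$, $Z=\partial_{A\setminus B}(Y)$, $X$ the rest of $A\setminus B$. A vector $v$ contains (or $a$ appears in $v$) $a\in A$ if $\langle v,a\rangle\ne0$. $\partial$ is quasi-elementary if $\partial_B,\partial_{A\setminus B}$ are elementary, each $\partial(x)$ for $x\in X$ contains at most one element of $P$, the corresponding coefficient is $1$, and each element of $P$ appears in at most one $\partial(x)$, $x\in X$. *)

(* Defs.v *)
From mathcomp Require Import all_boot all_order all_algebra.
Set Implicit Arguments. Unset Strict Implicit. Unset Printing Implicit Defensive.
Import GRing.Theory.
Local Open Scope ring_scope.

(* A = {a_1 < ... < a_N} is modelled by the ordinal type 'I_N with
   its natural order; the grading is deg : 'I_N -> int.  A linear map on E(A)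
   is a matrix D : 'M[F]_N acting on row vectors, so that
     D i j = < d(a_i), a_j >   (coefficient of a_j in d(a_i)). *)

Section Defs.
Variables (F : fieldType) (N : nat).
Implicit Types (D : 'M[F]_N) (S B : {set 'I_N}).

Definition Mdiff (deg : 'I_N -> int) D : Prop :=
  [/\ D *m D = 0,
      (forall i j, D i j != 0 -> deg j = deg i - 1) &
      (forall i j, D i j != 0 -> (j < i)%N)].

Definition MABdiff (deg : 'I_N -> int) B D : Prop :=
  Mdiff deg D /\ (forall i j, i \in B -> D i j != 0 -> j \in B).

(* For S = B (resp. S = A\B), the entries D i j with i, j in S are exactly the
   matrix of d_B (resp. of the induced differential d_{A\B} on
   E(A)/E(B) = E(A\B)). *)

Definition mapsto S D (i j : 'I_N) : bool :=
  [&& i \in S, j \in S, D i j == 1 & [forall k in S, (k != j) ==> (D i k == 0)]].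

Definition elementary S D : Prop :=
  (forall i, i \in S -> (forall j, j \in S -> D i j = 0) \/ exists j, mapsto S D i j)
  /\ (forall i i' j, mapsto S D i j -> mapsto S D i' j -> i = i').

(* Q = {b in S : d_S b <> 0},  R = d_S(Q),  P = S \ (Q u R)
   (applied to S = B this gives Q,R,P; to S = A\B it gives Y,Z,X) *)
Definition Qset S D : {set 'I_N} := [set i in S | [exists j in S, D i j != 0]].
Definition Rset S D : {set 'I_N} := [set j | [exists i in Qset S D, mapsto S D i j]].
Definition Pset S D : {set 'I_N} := S :\: (Qset S D :|: Rset S D).

Definition quasi_elementary (deg : 'I_N -> int) B D : Prop :=
  let P := Pset B D in let X := Pset (~: B) D in
  [/\ MABdiff deg B D,
      elementary B D /\ elementary (~: B) D,
      (forall x p p', x \in X -> p \in P -> p' \in P ->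
          D x p != 0 -> D x p' != 0 -> p = p'),
      (forall x p, x \in X -> p \in P -> D x p != 0 -> D x p = 1) &
      (forall p x x', p \in P -> x \in X -> x' \in X ->
          D x p != 0 -> D x' p != 0 -> x = x')].

End Defs.

(* Main.v *)
Require Import Defs.
From mathcomp Require Import all_boot all_order all_algebra.
Import GRing.Theory.
Local Open Scope ring_scope.

Lemma split_sum (F : fieldType) (N : nat) (B : {set 'I_N}) (D : 'M[F]_N) y z b :
  D *m D = 0 -> mapsto (~: B) D y z ->
  D z b + \sum_(k in B) D y k * D k b = 0.
Proof.
move=> DD /and4P[yB zB /eqP Dyz /forallP Hk].
have := congr1 (fun M : 'M[F]_N => M y b) DD; rewrite !mxE => E.
rewrite (bigID (fun k => k \in B)) /= addrC in E.
rewrite (bigD1 z) /= in E; last by rewrite -in_setC.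
rewrite Dyz mul1r big1 ?addr0 in E => //.
move=> k /andP[kB kz].
have := Hk k; rewrite in_setC kB kz /= => /eqP ->; by rewrite mul0r.
Qed.

Lemma to_mapsto (F : fieldType) (N : nat) (B : {set 'I_N}) (D : 'M[F]_N) k b :
  elementary B D -> k \in B -> b \in B -> D k b != 0 -> mapsto B D k b.
Proof.
move=> [E _] kB bB Dkb.
case: (E k kB) => [H|[j Hj]]; first by rewrite H ?eqxx in Dkb.
have := Hj; move=> /and4P[_ jB _ /forallP Hk].
case: (eqVneq j b) => [<- //|jb].
by have := Hk b; rewrite bB eq_sym jb /= (negbTE Dkb).
Qed.

Arguments split_sum {F N B D y z} b.
Arguments to_mapsto {F N B D k b}.

Theorem lemma4p1 (F : fieldType) (N : nat) (deg : 'I_N -> int)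
    (B : {set 'I_N}) (D : 'M[F]_N) :
  quasi_elementary deg B D ->
  (* (a) *)
  (forall q r y z,
      q \in Qset B D -> r \in Rset B D -> y \in Qset (~: B) D -> z \in Rset (~: B) D ->
      mapsto B D q r -> mapsto (~: B) D y z ->
      D y q = - D z r) /\
  (* (b) *)
  (forall y z b,
      y \in Qset (~: B) D -> z \in Rset (~: B) D -> mapsto (~: B) D y z ->
      b \in B -> D z b != 0 ->
      b \in Rset B D /\
      exists2 q, q \in Qset B D & mapsto B D q b && (D y q != 0)).
Proof.
move=> [[[DD _ _] _] [EB _] _ _ _]; split.
- move=> q r y z _ _ _ _ Hq Hyz.
  have := Hq; move=> /and4P[qB rB /eqP Dqr _].
  have := split_sum r DD Hyz.
  rewrite (bigD1 q) //= Dqr mulr1 big1 ?addr0.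
    by move=> /eqP; rewrite addrC addr_eq0 => /eqP.
  move=> k /andP[kB kq].
  case: (eqVneq (D k r) 0) => [->|nz]; first by rewrite mulr0.
  have := (EB.2 k q r (to_mapsto EB kB rB nz) Hq).
  by move=> kq'; rewrite kq' eqxx in kq.
- move=> y z b _ _ Hyz bB Dzb.
  have S := split_sum b DD Hyz.
  have : [exists k in B, D y k * D k b != 0].
    apply: contraT => /existsPn H.
    move: S; rewrite big1 ?addr0; first by move=> Z; rewrite Z eqxx in Dzb.
    by move=> k kB; have := H k; rewrite kB /= negbK => /eqP.
  move=> /existsP[k /andP[kB]]; rewrite mulf_eq0 negb_or => /andP[Dyk Dkb].
  have M := to_mapsto EB kB bB Dkb.
  have kQ : k \in Qset B D by rewrite inE kB; apply/existsP; exists b; rewrite bB.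
  split; last by exists k => //; rewrite M.
  by rewrite inE; apply/existsP; exists k; rewrite kQ M.
Qed.
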